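(* Let $K$ be a field, $\mathcal{H}$ a simple hypergraph on $\{x_1,\dots,x_n\}$ with edges $S_1,\dots,S_m$, let $i,j$ be integers, and let $\mathcal{B}_{i,j}$ be the set of basis elements $\overline{e_{\ell_1,\dots,\ell_i}}$ of $\overline{T}_i$ with $\overline{e_{\ell_1,\dots,\ell_i}}\in\mathrm{Ker}\,\overline{\partial}_i\setminus\mathrm{Im}\,\overline{\partial}_{i+1}$ and $|\bigcup_{k=1}^iS_{\ell_k}|=j$. Then (number of self semi-induced matchings in $\mathcal{H}$ of type $(i,j)$) $\le|\mathcal{B}_{i,j}|\le$ (number of self-contained semi-induced matchings in $\mathcal{H}$ of type $(i,j)$).
   Context: A simple hypergraph $\mathcal{H}$ on $\{x_1,\dots,x_n\}$ is a set $\mathcal{E}(\mathcal{H})$ of subsets (edges) of cardinality at least $2$, none contained in another. With edges ordered $S_1,\dots,S_m$, let $\overline{T}_0=K$ and for $i\ge1$ let $\overline{T}_i$ be the $K$-vector space with basis $\overline{e_{\ell_1,\dots,\ell_i}}$, $1\le\ell_1<\dots<\ell_i\le m$, graded by $\deg\overline{e_{\ell_1,\dots,\ell_i}}=|\bigcup_{t}S_{\ell_t}|$, with differential $\overline{\partial}_i(\overline{e_{\ell_1,\dots,\ell_i}})=\sum_{k:\,S_{\ell_k}\subseteq\bigcup_{t\neq k}S_{\ell_t}}(-1)^k\,\overline{e_{\ell_1,\dots,\widehat{\ell_k},\dots,\ell_i}}$ (the Taylor resolution of $R/I(\mathcal{H})$ tensored with $K$). For a family $\mathcal{S}=\{E_1,\dots,E_i\}$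 of distinct edges, its type is $(i,j)$ with $j=|\bigcup_\ell E_\ell|$. $\mathcal{S}$ is a self semi-induced matching if no edge outside $\mathcal{S}$ is contained in $\bigcup_\ell E_\ell$ and for all $k$, $E_k\nsubseteq\bigcup_{\ell\neq k}E_\ell$. It is a self-contained semi-induced matching if (i) for each edge $E\notin\mathcal{S}$, either $E\nsubseteq\bigcup_\ell E_\ell$ or there is $k$ with $E_k\subseteq E\cup\bigcup_{\ell\neq k}E_\ell$, and (ii) for all $k$, $E_k\nsubseteq\bigcup_{\ell\neq k}E_\ell$. *)

(* Defs.v *)
From HB Require Import structures.
From mathcomp Require Import all_boot all_order all_algebra.
From mathcomp Require Import boolp.
Set Implicit Arguments. Unset Strict Implicit. Unset Printing Implicit Defensive.
Import GRing.Theory.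
Local Open Scope ring_scope.

(* Hypergraph on vertices 'I_n with edges S_1..S_m given as S : 'I_m -> {set 'I_n}
   (edge S_(k+1) is S k; the order on edges is the order of 'I_m). *)
Definition simple_hypergraph (n m : nat) (S : 'I_m -> {set 'I_n}) : Prop :=
  (forall a, 2 <= #|S a|)%N /\ (forall a b, a != b -> ~~ (S a \subset S b)).

Definition edges_union n m (S : 'I_m -> {set 'I_n}) (F : {set 'I_m}) : {set 'I_n} :=
  \bigcup_(l in F) S l.

(* The vector space  \bigoplus_i \overline{T}_i : coordinates indexed by subsets
   L = {l_1 < ... < l_i} of edge indices; T_i = vectors supported on i-subsets. *)
Definition tvec (K : fieldType) (m : nat) := {ffun {set 'I_m} -> K}.

Definition tbasis (K : fieldType) m (L : {set 'I_m}) : tvec K m :=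
  [ffun X => (X == L)%:R].

Definition in_T (K : fieldType) m (i : nat) (v : tvec K m) : Prop :=
  forall X : {set 'I_m}, #|X| != i -> v X = 0.

(* sign (-1)^k where l = l_k is the k-th (1-based) element of L *)
Definition tsign (K : fieldType) m (L : {set 'I_m}) (l : 'I_m) : K :=
  (-1) ^+ #|[set t in L | (t <= l)%N]|.

Definition tdiff (K : fieldType) n m (S : 'I_m -> {set 'I_n}) (v : tvec K m) : tvec K m :=
  [ffun X => \sum_(L : {set 'I_m})
      \sum_(l in L | S l \subset edges_union S (L :\ l))
        (if X == L :\ l then tsign K L l * v L else 0)].

Definition in_image_diff (K : fieldType) n m (S : 'I_m -> {set 'I_n}) (i : nat)
  (w : tvec K m) : Prop :=
  exists v : tvec K m, in_T i.+1 v /\ tdiff S v = w.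

Definition Bset (K : fieldType) n m (S : 'I_m -> {set 'I_n}) (i j : nat) : {set {set 'I_m}} :=
  [set L : {set 'I_m} | [&& #|L| == i,
     tdiff S (tbasis K L) == 0,
     ~~ `[< in_image_diff S i (tbasis K L) >] &
     #|edges_union S L| == j]].

Definition of_type n m (S : 'I_m -> {set 'I_n}) (i j : nat) (F : {set 'I_m}) : bool :=
  (#|F| == i) && (#|edges_union S F| == j).

Definition self_semi_induced n m (S : 'I_m -> {set 'I_n}) (F : {set 'I_m}) : bool :=
  [forall e, (e \notin F) ==> ~~ (S e \subset edges_union S F)] &&
  [forall k in F, ~~ (S k \subset edges_union S (F :\ k))].

Definition self_contained_semi_induced n m (S : 'I_m -> {set 'I_n}) (F : {set 'I_m}) : bool :=
  [forall e, (e \notin F) ==>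
     (~~ (S e \subset edges_union S F)
      || [exists k in F, S k \subset S e :|: edges_union S (F :\ k)])] &&
  [forall k in F, ~~ (S k \subset edges_union S (F :\ k))].

(* Main.v *)
Require Import Defs.
From HB Require Import structures.
From mathcomp Require Import all_boot all_order all_algebra.
From mathcomp Require Import boolp.
Import GRing.Theory.
Local Open Scope ring_scope.

Section Aux.
Variables (K : fieldType) (n m : nat) (S : 'I_m -> {set 'I_n}).

Lemma tdiff_pt (L : {set 'I_m}) (c : K) X :
  tdiff S [ffun Y => c * (Y == L)%:R] X =
  \sum_(l in L | S l \subset edges_union S (L :\ l))
     (if X == L :\ l then tsign K L l * c else 0).
Proof.
rewrite ffunE (bigD1 L) //= [X in _ + X = _]big1 ?addr0.
  by apply: eq_bigr => l _; rewrite ffunE eqxx GRing.mulr1.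
move=> L' /negbTE HL'; apply: big1 => l _; rewrite ffunE HL' !GRing.mulr0.
by case: ifP.
Qed.

Lemma tbasisE (L : {set 'I_m}) : tbasis K L = [ffun Y => 1 * (Y == L)%:R].
Proof. by apply/ffunP => Y; rewrite !ffunE GRing.mul1r. Qed.

Lemma setD1_inj (T : finType) (L : {set T}) (k l : T) : k \in L -> l \in L -> L :\ k = L :\ l -> k = l.
Proof.
move=> kL lL E; apply/eqP; apply/negPn/negP => nkl.
have : k \in L :\ l by rewrite in_setD1 kL andbT; apply/negP => /eqP E'; move: nkl; rewrite E' eqxx.
by rewrite -E setD11.
Qed.

Lemma eu_U1 e (A : {set 'I_m}) : e \notin A ->
  edges_union S (e |: A) = S e :|: edges_union S A.
Proof. by move=> eA; rewrite /edges_union big_setU1. Qed.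

Lemma tsign_sq (L : {set 'I_m}) l : tsign K L l * tsign K L l = 1.
Proof. by rewrite /tsign -GRing.exprD -signr_odd oddD addbb expr0. Qed.

Lemma tsign_neq0 (L : {set 'I_m}) l : tsign K L l != 0.
Proof. by rewrite /tsign GRing.signr_eq0. Qed.

End Aux.

Theorem lemma2p4 (K : fieldType) (n m : nat) (S : 'I_m -> {set 'I_n})
  (HS : simple_hypergraph S) (i j : nat) :
  (#|[set F | of_type S i j F && self_semi_induced S F]|
     <= #|Bset K S i j|
   <= #|[set F | of_type S i j F && self_contained_semi_induced S F]|)%N.
Proof.
apply/andP; split; apply: subset_leq_card; apply/subsetP => F.
- rewrite !inE => /andP[/andP[/eqP cF /eqP uF] /andP[/forallP H1 /forall_inP H2]].
  rewrite cF uF !eqxx /= andbT; apply/andP; split.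
    apply/eqP/ffunP => X; rewrite tbasisE tdiff_pt ffunE.
    by apply: big1 => l /andP[lF rem]; move: (H2 l lF); rewrite rem.
  apply/negP => /asboolP [v [_ Hv]].
  have := congr1 (fun w : tvec K m => w F) Hv.
  rewrite /= !ffunE eqxx.
  rewrite big1; first by move=> /esym /eqP; rewrite GRing.oner_eq0.
  move=> L _; apply: big1 => l /andP[lL rem].
  case: eqP => // EF; exfalso.
  have lF : l \notin F by rewrite EF setD11.
  rewrite -EF in rem; move: (H1 l); rewrite lF /= rem //.
- rewrite !inE => /andP[/eqP cF /andP[/eqP d0 /andP[nim /eqP uF]]].
  rewrite /of_type cF uF !eqxx /=.
  have H2 : [forall k in F, ~~ (S k \subset edges_union S (F :\ k))].
    apply/forall_inP => k kF; apply/negP => rem.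
    have := congr1 (fun w : tvec K m => w (F :\ k)) d0.
    rewrite /= tbasisE tdiff_pt ffunE (bigD1 k) /=; last by rewrite kF rem.
    rewrite eqxx big1 ?GRing.addr0 ?GRing.mulr1.
      by move/eqP; rewrite (negbTE (tsign_neq0 _ _ _ _)).
    move=> l /andP[/andP[lF _] nlk].
    case: eqP => // E; exfalso; move/eqP: nlk; apply.
    exact: (@setD1_inj _ _ _ _ lF kF (esym E)).
  rewrite /self_contained_semi_induced H2 andbT; apply/forallP => e; apply/implyP => eF.
  case: (boolP (S e \subset edges_union S F)) => //= HeU.
  apply: contraT => /exists_inPn Hno.
  suff : `[< in_image_diff S i (tbasis K F) >] by rewrite (negbTE nim).
  apply/asboolP.
  set L := e |: F.
  exists [ffun Y => tsign K L e * (Y == L)%:R]; split.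
    move=> X cX; rewrite ffunE.
    case: eqP => [EX|]; last by rewrite GRing.mulr0.
    by move: cX; rewrite EX cardsU1 eF cF add1n eqxx.
  apply/ffunP => X; rewrite tdiff_pt (big_pred1 e).
    rewrite tsign_sq ffunE /L setU1K //.
    by case: eqP.
  move=> l /=; rewrite /L in_setU1.
  case: (eqVneq l e) => [->|nle] /=.
    by rewrite setU1K // HeU.
  case: (boolP (l \in F)) => //= lF.
  have -> : (e |: F) :\ l = e |: (F :\ l).
    apply/setP => x; rewrite !inE.
    by case: (eqVneq x e) => [->|]; rewrite ?andbT ?orbF //= eq_sym nle.
  rewrite eu_U1; last by rewrite in_setD1 negb_and eF orbT.
  by apply/negbTE; apply: Hno.
Qed.
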